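(* Let $\phi$ be a reduced Boolean formula in the variables $x_1,\dots,x_n$ defining a set $S \subseteq \{0,1\}^n$ and let $Q \subseteq [0,1]^n$ be any convex set containing $S$. Then $\phi(Q) \cap \mathbb{Z}^n = S$.
   Context: Boolean formulas are built from input variables $x_1,\dots,x_n$ using $\wedge$, $\vee$, $\neg$, interpreted as functions $\{0,1\}^n\to\{0,1\}$; $\phi$ defines $S=\{x\in\{0,1\}^n:\phi(x)=1\}$. A formula is reduced if negations apply only to input variables. For a reduced $\phi$ and convex $Q\subseteq[0,1]^n$, $\phi(Q)$ is defined recursively: $x_i$ is replaced by $\{x \in Q : x_i = 1\}$; $\neg x_i$ by $\{x \in Q : x_i = 0\}$; a conjunction by the intersection of the corresponding sets; a disjunction by the convex hull of the union of the corresponding sets. *)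

(* Defs.v *)
From mathcomp Require Import all_boot all_order all_algebra.
From mathcomp Require Import boolp classical_sets reals.
Set Implicit Arguments. Unset Strict Implicit. Unset Printing Implicit Defensive.
Import Order.TTheory GRing.Theory Num.Theory.
Local Open Scope classical_set_scope.
Local Open Scope ring_scope.

Definition pt (R : realType) (n : nat) := 'I_n -> R.

(* Reduced Boolean formulas over x_1..x_n: negation only on variables. *)
Inductive rformula (n : nat) : Type :=
| RVar of 'I_n
| RNVar of 'I_n
| RAnd of rformula n & rformula n
| ROr of rformula n & rformula n.

Fixpoint reval (n : nat) (phi : rformula n) (b : 'I_n -> bool) : bool :=
  match phi with
  | RVar i => b i
  | RNVar i => ~~ b i
  | RAnd p q => reval p b && reval q b
  | ROr p q => reval p b || reval q b
  end.

Definition bvec (R : realType) (n : nat) (b : 'I_n -> bool) : pt R n :=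
  fun i => (b i)%:R.

Definition defset (R : realType) (n : nat) (phi : rformula n) : set (pt R n) :=
  [set x | exists b : 'I_n -> bool, x = bvec R b /\ reval phi b].

Definition cube (R : realType) (n : nat) : set (pt R n) :=
  [set x | forall i, 0 <= x i <= 1].

Definition intpts (R : realType) (n : nat) : set (pt R n) :=
  [set x | forall i, x i \is a Num.int].

Definition convex (R : realType) (n : nat) (A : set (pt R n)) : Prop :=
  forall x y (t : R), A x -> A y -> 0 <= t <= 1 ->
    A (fun i => t * x i + (1 - t) * y i).

Definition hull (R : realType) (n : nat) (A : set (pt R n)) : set (pt R n) :=
  [set x | exists (m : nat) (l : 'I_m -> R) (p : 'I_m -> pt R n),
      [/\ forall k, 0 <= l k, \sum_(k < m) l k = 1, forall k, A (p k)
        & forall i, x i = \sum_(k < m) l k * p k i]].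

Fixpoint relax (R : realType) (n : nat) (phi : rformula n) (Q : set (pt R n))
  : set (pt R n) :=
  match phi with
  | RVar i => [set x | Q x /\ x i = 1]
  | RNVar i => [set x | Q x /\ x i = 0]
  | RAnd p q => relax p Q `&` relax q Q
  | ROr p q => hull (relax p Q `|` relax q Q)
  end.

(* Main.v *)
Require Import Defs.
From mathcomp Require Import all_boot all_order all_algebra.
From mathcomp Require Import boolp classical_sets reals.
From mathcomp Require Import zify.
Import Order.TTheory GRing.Theory Num.Theory.
Local Open Scope classical_set_scope.
Local Open Scope ring_scope.

Lemma relax_cube (R : realType) (n : nat) (phi : rformula n) (Q : set (pt R n)) :
  Q `<=` @cube R n -> relax phi Q `<=` @cube R n.
Proof.
move=> QC; elim: phi => [i|i|p IHp q IHq|p IHp q IHq] /=.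
- by move=> x [] /QC.
- by move=> x [] /QC.
- by move=> x [] /IHp.
- move=> x [m [l [pp [l0 l1 pin xe]]]] i; rewrite xe.
  have pc k : 0 <= pp k i <= 1.
    by case: (pin k) => [/IHp|/IHq]; apply.
  apply/andP; split.
    by apply: sumr_ge0 => k _; rewrite mulr_ge0 //; case/andP: (pc k).
  rewrite -l1; apply: ler_sum => k _; apply: ler_piMr => //.
  by case/andP: (pc k).
Qed.

Lemma extreme (R : realType) (n m : nat) (l : 'I_m -> R) (pp : 'I_m -> pt R n)
  (b : 'I_n -> bool) :
  (forall k, 0 <= l k) -> \sum_(k < m) l k = 1 ->
  (forall k, @cube R n (pp k)) ->
  (forall i, bvec R b i = \sum_(k < m) l k * pp k i) ->
  forall k, l k != 0 -> pp k = bvec R b.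
Proof.
move=> l0 l1 pc xe k lk; apply: funext => i.
have := xe i; rewrite /bvec; case: (b i) => /= e.
- have h : \sum_(k0 < m) l k0 * (1 - pp k0 i) = 0.
    under eq_bigr => k0 _ do rewrite mulrBr mulr1.
    by rewrite sumrB l1 -e subrr.
  have := psumr_eq0P _ h (i:=k) isT.
  move=> /(_ _)/eqP; rewrite mulf_eq0 (negbTE lk) /= subr_eq0 => H.
  by apply/esym/eqP; apply: H => k0 _; rewrite mulr_ge0 // subr_ge0; case/andP: (pc k0 i).
- have := psumr_eq0P _ (esym e) (i:=k) isT.
  move=> /(_ _)/eqP; rewrite mulf_eq0 (negbTE lk) /= => H.
  by apply/eqP; apply: H => k0 _; rewrite mulr_ge0 //; case/andP: (pc k0 i).
Qed.

Lemma relax_sound (R : realType) (n : nat) (phi : rformula n) (Q : set (pt R n)) :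
  Q `<=` @cube R n -> forall b, relax phi Q (bvec R b) -> reval phi b.
Proof.
move=> QC; elim: phi => [i|i|p IHp q IHq|p IHp q IHq] b /=.
- by case=> _; rewrite /bvec; case: (b i) => //= /eqP; rewrite eq_sym oner_eq0.
- by case=> _; rewrite /bvec; case: (b i) => //= /eqP; rewrite oner_eq0.
- by case=> /IHp -> /IHq ->.
- move=> [m [l [pp [l0 l1 pin xe]]]].
  have pc k : @cube R n (pp k).
    by case: (pin k) => [/(@relax_cube R n p Q QC)|/(@relax_cube R n q Q QC)].
  case: (pselect (exists k, l k != 0)) => [[k hk]|nex]; last first.
    exfalso; have : \sum_(k < m) l k = 0.
      apply: big1 => k _; apply/eqP; apply/negPn/negP => h; apply: nex; by exists k.
    by rewrite l1 => /eqP; rewrite oner_eq0.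
  have E := @extreme R n m l pp b l0 l1 pc xe k hk.
  have := pin k; rewrite E; case => [/IHp ->|/IHq ->] //; by rewrite orbT.
Qed.

Lemma relax_complete (R : realType) (n : nat) (phi : rformula n) (Q : set (pt R n)) b :
  reval phi b -> Q (bvec R b) -> relax phi Q (bvec R b).
Proof.
elim: phi => [i|i|p IHp q IHq|p IHp q IHq] /=.
- by move=> bi Qb; split => //; rewrite /bvec bi.
- by move=> bi Qb; split => //; rewrite /bvec (negbTE bi).
- by case/andP => /IHp h1 /IHq h2 Qb; split; [apply: h1|apply: h2].
- move=> H Qb; exists 1%N, (fun _ => 1), (fun _ => bvec R b); split.
  + by move=> k; rewrite ler01.
  + by rewrite big_ord1.
  + move=> _; case/orP: H => [/IHp h|/IHq h]; [left|right]; exact: h.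
  + by move=> i; rewrite big_ord1 mul1r.
Qed.

Theorem corollary4p6 (R : realType) (n : nat) (phi : rformula n)
  (Q : set (pt R n)) :
  Q `<=` @cube R n -> convex Q -> @defset R n phi `<=` Q ->
  relax phi Q `&` @intpts R n = @defset R n phi.
Proof.
move=> QC _ DQ; apply/seteqP; split.
- move=> x [rx ix].
  have xc := @relax_cube R n phi Q QC x rx.
  have xb : x = bvec R (fun i => x i == 1).
    apply: funext => i; rewrite /bvec.
    case: (eqVneq (x i) 1) => //= h.
    have /intrP [z ez] := ix i.
    have := xc i; rewrite ez ler0z lerz1 => /andP [z0 z1].
    move: h; rewrite ez.
    have : (z = 0 \/ z = 1) by lia.
    by case=> -> //; rewrite eqxx.
  exists (fun i => x i == 1); split => //.
  by apply: (@relax_sound R n phi Q QC); rewrite -xb.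
- move=> x Dx; split; last first.
    by case: Dx => b [-> _] i; rewrite /bvec; case: (b i); rewrite ?intr_int.
  have Qx := DQ _ Dx.
  by case: Dx Qx => b [-> rb] Qb; apply: relax_complete.
Qed.
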